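(* Let $\overline X,\overline Y$ be independent balanced real random variables with finite second moments, and let $E\in\mathbb{R}$. Then \[ \operatorname{Var}\big|\overline X+\overline Y+E\big| \;\ge\; \frac{1}{4}\max\big\{\operatorname{Var}|\overline X+E|,\ \operatorname{Var}|\overline Y+E|\big\}. \]
   Context: A random variable is balanced if it has expectation $0$. $\operatorname{Var} Z=\mathbb{E}[Z^2]-(\mathbb{E}Z)^2$. *)

(* Defs.v *)
From HB Require Import structures.
From mathcomp Require Import all_boot all_order all_algebra.
From mathcomp Require Import all_classical all_reals all_analysis.
Set Implicit Arguments. Unset Strict Implicit. Unset Printing Implicit Defensive.
Import Order.TTheory GRing.Theory Num.Theory.

Local Open Scope classical_set_scope.
Local Open Scope ring_scope.

Definition independent_rv {d} {T : measurableType d} {R : realType}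
  (P : probability T R) (X Y : T -> R) : Prop :=
  forall A B : set R, measurable A -> measurable B ->
    P (X @^-1` A `&` Y @^-1` B) = (P (X @^-1` A) * P (Y @^-1` B))%E.

Definition balanced {d} {T : measurableType d} {R : realType}
  (P : probability T R) (X : T -> R) : Prop := ('E_P[X] = 0)%E.

(* Main.v *)
Require Import Defs.
From HB Require Import structures.
From mathcomp Require Import all_boot all_order all_algebra.
From mathcomp Require Import all_classical all_reals all_analysis.
Import Order.TTheory GRing.Theory Num.Theory.
From mathcomp Require Import measurable_realfun ring lra.

Module Lemma7Helpers.
Import numFieldNormedType.Exports.
Set Implicit Arguments. Unset Strict Implicit. Unset Printing Implicit Defensive.
Local Open Scope classical_set_scope.
Local Open Scope ring_scope.

Lemma pw (R : realType) (x y z : R) : y <= x ->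
  [/\ x - y <= `|x + z| + `|y + z|,
      (x - y < `|x + z| + `|y + z| -> (x - y) ^+ 2 <= (`|x + z| - `|y + z|) ^+ 2) &
      `|(x + y + 2 * z) - (`|x + z| - `|y + z|)| <= `|x + z| + `|y + z| - (x - y)].
Proof.
move=> yx.
have [h1|h1] := lerP 0 (x + z); have [h2|h2] := lerP 0 (y + z);
  rewrite ?(ger0_norm h1) ?(ger0_norm h2) ?(ltr0_norm h1) ?(ltr0_norm h2);
  (split; [lra| move=> h; nra | rewrite ler_norml; apply/andP; split; lra]).
Qed.

Lemma arith (R : realType) (m k Ef Ef2 rho ER2 pi xy : R) :
  0 <= m -> m <= k -> m <= `|xy| ->
  k ^+ 2 * pi <= Ef2 ->
  (forall l, 2 * l * rho - l ^+ 2 * pi <= ER2) ->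
  `|xy - Ef| <= rho ->
  Ef ^+ 2 <= Ef2 -> rho ^+ 2 <= ER2 -> 0 <= pi -> pi <= 1 ->
  m ^+ 2 / 2 <= Ef2 + Ef ^+ 2 + ER2 - rho ^+ 2.
Proof.
move=> m0 mk mxy H1 H2 H3 H4 H5 p0 p1.
have [c1|c2] := lerP (m ^+ 2 / 4) (Ef ^+ 2).
  nra.
have hEf : `|Ef| < m / 2.
  rewrite -(ltr_pXn2r (n:=2)) ?nnegrE ?divr_ge0// ?normr_ge0//.
  by rewrite real_normK ?num_real// expr_div_n; lra.
have hr : m / 2 < rho.
  have t : `|xy| <= `|xy - Ef| + `|Ef|.
    by rewrite (le_trans _ (ler_normD _ _))// subrK.
  lra.
have [pp|pz] := ltrP 0 pi.
  have := H2 (rho / pi).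
  have -> : 2 * (rho / pi) * rho - (rho / pi) ^+ 2 * pi = rho ^+ 2 / pi.
    by field; rewrite gt_eqF.
  move=> H6.
  have H7 : (m ^+ 2 / 4) / pi <= rho ^+ 2 / pi.
    by rewrite ler_pM2r ?invr_gt0//; nra.
  have mk2 : m ^+ 2 <= k ^+ 2 by rewrite lerXn2r ?nnegrE //; lra.
  have H8 : k ^+ 2 * pi >= m ^+ 2 * pi by rewrite ler_pM2r.
  have H9 : 0 <= (rho ^+ 2 - m ^+ 2 / 4) * (pi^-1 - 1).
    apply: mulr_ge0; first nra.
    by rewrite subr_ge0 invf_ge1.
  have E9 : (rho ^+ 2 - m ^+ 2 / 4) * (pi^-1 - 1) = rho ^+ 2 / pi - (m ^+ 2 / 4) / pi - rho ^+ 2 + m ^+ 2 / 4.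
    by field; rewrite gt_eqF.
  have H10 : 0 <= (m ^+ 2 / (4 * pi)) * (4 * pi ^+ 2 - 3 * pi + 1).
    apply: mulr_ge0; last nra.
    by apply: divr_ge0; [nra|nra].
  have E10 : (m ^+ 2 / (4 * pi)) * (4 * pi ^+ 2 - 3 * pi + 1) = m ^+ 2 * pi + (m ^+ 2 / 4) / pi - m ^+ 2 / 4 - m ^+ 2 / 2.
    by field; rewrite gt_eqF.
  have := sqr_ge0 Ef.
  lra.
have pz0 : pi = 0 by apply/eqP; rewrite eq_le pz p0.
have rpos : 0 < rho by nra.
have := H2 ((ER2 + 1) / (2 * rho)).
rewrite pz0 expr2 !mulr0 subr0.
have -> : 2 * ((ER2 + 1) / (2 * rho)) * rho = ER2 + 1 by field; rewrite gt_eqF.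
lra.
Qed.


Section ex.
Context d (T : measurableType d) (R : realType) (P : probability T R).

Definition Ex (f : T -> R) : R := fine ('E_P[f])%E.

Local Notation L1 f := (f \in Lfun P 1%E).
Local Notation L2 f := (f \in Lfun P 2%:E).

Lemma L1_int f : L1 f -> P.-integrable setT (EFin \o f).
Proof. by move/Lfun1_integrable. Qed.

Lemma Ex_fin f : L1 f -> ('E_P[f])%E = (Ex f)%:E.
Proof. by move=> h; rewrite /Ex fineK// expectation_fin_num. Qed.

Lemma ExD f g : L1 f -> L1 g -> Ex (fun w => f w + g w) = Ex f + Ex g.
Proof.
move=> hf hg; rewrite /Ex.
have -> : (fun w => f w + g w) = (f \+ g)%R by [].
rewrite expectationD// (Ex_fin hf) (Ex_fin hg)//.
Qed.

Lemma ExZ f k : L1 f -> Ex (fun w => k * f w) = k * Ex f.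
Proof.
move=> hf; rewrite /Ex.
have -> : (fun w => k * f w) = (k \o* f)%R by apply/funext => w /=; rewrite mulrC.
by rewrite expectationZl// (Ex_fin hf).
Qed.

Lemma Excst c : Ex (fun _ => c) = c.
Proof. by rewrite /Ex -[fun _ => c]/(cst c) expectation_cst. Qed.

Lemma Ex_ge0 f : (forall w, 0 <= f w) -> 0 <= Ex f.
Proof. by move=> h; rewrite /Ex fine_ge0// expectation_ge0. Qed.

Lemma L1D f g : L1 f -> L1 g -> L1 (fun w => f w + g w).
Proof.
move=> hf hg; exact: ((Lfun_addr_closed P (lexx 1%E)).2 f g hf hg).
Qed.

Lemma L1Z f k : L1 f -> L1 (fun w => k * f w).
Proof.
move=> hf; have -> : (fun w => k * f w) = (k \o* f)%R by apply/funext => w /=; rewrite mulrC.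
exact: (Lfun_scale k (lexx 1) hf). Qed.

Lemma L1cst c : L1 (fun _ => c).
Proof. exact: (Lfun_cst P c 1). Qed.

Lemma L2D f g : L2 f -> L2 g -> L2 (fun w => f w + g w).
Proof.
move=> hf hg; have h12 : (1 <= (2%:E : extended R))%E by rewrite lee_fin ler1n.
exact: ((Lfun_addr_closed P h12).2 f g hf hg).
Qed.

Lemma L2Z f k : L2 f -> L2 (fun w => k * f w).
Proof.
move=> hf; have -> : (fun w => k * f w) = (k \o* f)%R by apply/funext => w /=; rewrite mulrC.
by apply: (Lfun_scale k _ hf); rewrite ler1n. Qed.

Lemma L2cst c : L2 (fun _ => c).
Proof. exact: (Lfun_cst P c 2). Qed.

Lemma L21 f : L2 f -> L1 f.
Proof. by apply: Lfun_subset12; rewrite fin_num_measure. Qed.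

Lemma L2sq f : L2 f -> L1 (fun w => f w ^+ 2).
Proof. move=> hf; have h := Lfun2_mul_Lfun1 hf hf; have -> : (fun w => f w ^+ 2) = (f \* f)%R by apply/funext => w; rewrite /= expr2. exact: h. Qed.

Lemma L2M f g : L2 f -> L2 g -> L1 (fun w => f w * g w).
Proof. by move=> hf hg; have := Lfun2_mul_Lfun1 hf hg. Qed.

Lemma Lmeas p (p1 : (1 <= p)%E) f : f \in Lfun P p -> measurable_fun setT f.
Proof. by case/andP; rewrite inE. Qed.

Lemma L1_dom (f h : T -> R) : measurable_fun setT f -> L1 h -> (forall w, `|f w| <= `|h w|) -> L1 f.
Proof.
move=> mf hh fh; apply/Lfun1_integrable.
apply: (le_integrable measurableT _ _ (L1_int hh)).
  exact/measurable_EFinP.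
by move=> x _ /=; rewrite lee_fin.
Qed.

Lemma L2_norm f : L2 f -> L2 (fun w => `|f w|).
Proof.
case/andP; rewrite !inE/= => mf ff; apply/andP; split; rewrite inE/=.
  exact: measurableT_comp.
rewrite /finite_norm.
under [X in ('N[_]__[X])%E]eq_fun => x do rewrite -abse_EFin.
by rewrite Lnorm_abse.
Qed.


Lemma ExN f : L1 f -> Ex (fun w => - f w) = - Ex f.
Proof.
move=> hf; have -> : (fun w => - f w) = (fun w => (-1) * f w).
  by apply/funext => w; rewrite mulN1r.
by rewrite ExZ// mulN1r.
Qed.

Lemma L1N f : L1 f -> L1 (fun w => - f w).
Proof.
move=> hf; have -> : (fun w => - f w) = (fun w => (-1) * f w).
  by apply/funext => w; rewrite mulN1r.
exact: L1Z.
Qed.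

Lemma Ex_le f g : L1 f -> L1 g -> (forall w, f w <= g w) -> Ex f <= Ex g.
Proof.
move=> hf hg fg.
have : 0 <= Ex (fun w => g w + (- f w)).
  by apply: Ex_ge0 => w; rewrite subr_ge0.
rewrite ExD ?L1N//.
by rewrite ExN// subr_ge0.
Qed.

Lemma L1_lin5 c0 c1 c2 c3 c4 c5 f1 f2 f3 f4 f5 : L1 f1 -> L1 f2 -> L1 f3 -> L1 f4 -> L1 f5 ->
  L1 (fun w => c0 + c1 * f1 w + c2 * f2 w + c3 * f3 w + c4 * f4 w + c5 * f5 w).
Proof.
move=> h1 h2 h3 h4 h5.
by apply: L1D; [apply: L1D; [apply: L1D; [apply: L1D; [apply: L1D|]|]|]|];
  rewrite ?L1cst ?L1Z.
Qed.

Lemma Ex_lin5 c0 c1 c2 c3 c4 c5 f1 f2 f3 f4 f5 : L1 f1 -> L1 f2 -> L1 f3 -> L1 f4 -> L1 f5 ->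
  Ex (fun w => c0 + c1 * f1 w + c2 * f2 w + c3 * f3 w + c4 * f4 w + c5 * f5 w) =
  c0 + c1 * Ex f1 + c2 * Ex f2 + c3 * Ex f3 + c4 * Ex f4 + c5 * Ex f5.
Proof.
move=> h1 h2 h3 h4 h5.
rewrite ExD; last 2 first.
- by apply: L1D; [apply: L1D; [apply: L1D; [apply: L1D|]|]|]; rewrite ?L1cst ?L1Z.
- exact: L1Z.
rewrite ExD; last 2 first.
- by apply: L1D; [apply: L1D; [apply: L1D|]|]; rewrite ?L1cst ?L1Z.
- exact: L1Z.
rewrite ExD; last 2 first.
- by apply: L1D; [apply: L1D|]; rewrite ?L1cst ?L1Z.
- exact: L1Z.
rewrite ExD; last 2 first.
- by apply: L1D; rewrite ?L1cst ?L1Z.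
- exact: L1Z.
rewrite ExD; last 2 first.
- exact: L1cst.
- exact: L1Z.
by rewrite Excst !ExZ.
Qed.


Section ysec.
Variable Y : T -> R.
Hypothesis hY2 : L2 Y.
Hypothesis hY0 : ('E_P[Y] = 0)%E.

Definition gY x := Ex (fun v => `|x + Y v|).
Definition s2 := Ex (fun v => Y v ^+ 2).

Lemma hY1 : L1 Y. Proof. exact: L21. Qed.
Lemma ExY0 : Ex Y = 0. Proof. by rewrite /Ex hY0. Qed.
Lemma L2u x : L2 (fun v => `|x + Y v|).
Proof. exact: (L2_norm (L2D (L2cst x) hY2)). Qed.
Lemma L1Y2 : L1 (fun v => Y v ^+ 2). Proof. exact: L2sq. Qed.

Lemma Ex_u2 x : Ex (fun v => `|x + Y v| ^+ 2) = x ^+ 2 + s2.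
Proof.
have -> : (fun v => `|x + Y v| ^+ 2) = (fun v => x ^+ 2 + (2 * x) * Y v + 1 * (Y v ^+ 2) + 0 * Y v + 0 * Y v + 0 * Y v).
  by apply/funext => v; rewrite real_normK ?num_real//; ring.
rewrite Ex_lin5 ?hY1 ?L1Y2// ExY0 /s2; ring.
Qed.

Lemma D x y : (`|x| - `|y|) ^+ 2 / 4 <= x ^+ 2 + y ^+ 2 + 2 * s2 - 2 * gY x * gY y.
Proof.
wlog yx : x y / y <= x.
  move=> H; have [/H//|xy] := lerP y x.
  have h := H y x (ltW xy).
  have e : (`|x| - `|y|) ^+ 2 = (`|y| - `|x|) ^+ 2 by ring.
  rewrite e; lra.
set k := x - y.
pose u := fun v => `|x + Y v|.
pose nu := fun v => `|y + Y v|.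
have Lu : L2 u := L2u x.
have Lnu : L2 nu := L2u y.
have L1u := L21 Lu.
have L1nu := L21 Lnu.
have Lu2 : L1 (fun v => u v ^+ 2) := L2sq Lu.
have Lnu2 : L1 (fun v => nu v ^+ 2) := L2sq Lnu.
have Lunu : L1 (fun v => u v * nu v) := L2M Lu Lnu.
have mu_ : measurable_fun setT u := Lmeas (lee1n 2) Lu.
have mnu : measurable_fun setT nu := Lmeas (lee1n 2) Lnu.
pose A := [set v | k < u v + nu v].
have mA : measurable A.
  have mb : measurable_fun setT (fun v => k < u v + nu v).
    by apply: measurable_fun_ltr; [exact: measurable_cst| exact: measurable_funD].
  rewrite [X in measurable X](_ : _ = (fun v => k < u v + nu v) @^-1` [set true]).
    by move: mb => /(_ measurableT [set true]); rewrite setTI; exact.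
  by apply/seteqP; split => v /=.
pose ind := (\1_A : T -> R).
have indE v : ind v = ((k < u v + nu v)%R)%:R.
  by rewrite /ind indicE /A; congr (_%:R); rewrite mem_setE.
have Lind : L1 ind.
  apply: (L1_dom (h := fun _ => 1)); [exact: measurable_indic| exact: L1cst|].
  by move=> v; rewrite indE normr1; case: (_ < _); rewrite ?normr0 ?normr1.
have Eu2 : Ex (fun v => u v ^+ 2) = x ^+ 2 + s2 := Ex_u2 x.
have Enu2 : Ex (fun v => nu v ^+ 2) = y ^+ 2 + s2 := Ex_u2 y.
have pwv v := pw (Y v) yx.
set Eu := gY x. set Enu := gY y.
have EuE : Ex u = Eu by []. have EnuE : Ex nu = Enu by [].
set c := Ex (fun v => u v * nu v).
set pi := Ex ind.
have H1 : k ^+ 2 * pi <= (x ^+ 2 + s2) + (y ^+ 2 + s2) - 2 * c.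
  have pw1 : forall v, 0 + k ^+ 2 * ind v + 0 * ind v + 0 * ind v + 0 * ind v + 0 * ind v <=
      0 + 1 * (u v ^+ 2) + 1 * (nu v ^+ 2) + (-2) * (u v * nu v) + 0 * u v + 0 * nu v.
    move=> v; have [p1 p2 p3] := pwv v; rewrite indE.
    have -> : 0 + 1 * (u v ^+ 2) + 1 * (nu v ^+ 2) + (-2) * (u v * nu v) + 0 * u v + 0 * nu v
      = (u v - nu v) ^+ 2 by ring.
    have [h|h] := ltrP k (u v + nu v).
      by have := p2 h; rewrite /u /nu /k /=; lra.
    by rewrite /=; have := sqr_ge0 (u v - nu v); lra.
  have := Ex_le (L1_lin5 _ _ _ _ _ _ Lind Lind Lind Lind Lind)
                (L1_lin5 _ _ _ _ _ _ Lu2 Lnu2 Lunu L1u L1nu) pw1.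
  rewrite !Ex_lin5 // Eu2 Enu2 EuE EnuE -/pi -/c; lra.
have H2 : forall l, 2 * l * (Eu + Enu - k) - l ^+ 2 * pi <=
    k ^+ 2 + (x ^+ 2 + s2) + (y ^+ 2 + s2) + 2 * c - 2 * k * Eu - 2 * k * Enu.
  move=> l.
  have pw2 : forall v, - (2 * l * k) + (2 * l) * u v + (2 * l) * nu v + (- l ^+ 2) * ind v + 0 * ind v + 0 * ind v <=
      k ^+ 2 + 1 * (u v ^+ 2) + 1 * (nu v ^+ 2) + 2 * (u v * nu v) + (- (2 * k)) * u v + (- (2 * k)) * nu v.
    move=> v; have [p1 p2 p3] := pwv v; rewrite indE.
    have [h|h] := ltrP k (u v + nu v).
      rewrite /=; have := sqr_ge0 (u v + nu v - k - l); nra.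
    rewrite /=; have e : u v + nu v = k by move: h; rewrite /u /nu /k => h; lra.
    have -> : k ^+ 2 + 1 * (u v ^+ 2) + 1 * (nu v ^+ 2) + 2 * (u v * nu v) + (- (2 * k)) * u v + (- (2 * k)) * nu v
      = (u v + nu v - k) ^+ 2 by ring.
    rewrite e subrr expr2 mulr0.
    have -> : - (2 * l * k) + 2 * l * u v + 2 * l * nu v = 2 * l * (u v + nu v - k) by ring.
    by rewrite e subrr mulr0 mulr0 !addr0.
  have := Ex_le (L1_lin5 _ _ _ _ _ _ L1u L1nu Lind Lind Lind)
                (L1_lin5 _ _ _ _ _ _ Lu2 Lnu2 Lunu L1u L1nu) pw2.
  rewrite !Ex_lin5 // Eu2 Enu2 EuE EnuE -/pi -/c; lra.
have H3 : `|(x + y) - (Eu - Enu)| <= Eu + Enu - k.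
  have pw3a : forall v, (x + y) + 2 * Y v + (-1) * u v + 1 * nu v + 0 * u v + 0 * u v <=
      - k + 1 * u v + 1 * nu v + 0 * u v + 0 * u v + 0 * u v.
    move=> v; have [p1 p2 p3] := pwv v; move: p3; rewrite ler_norml /u /nu /k => /andP[_ p3]; lra.
  have pw3b : forall v, - (x + y) + (-2) * Y v + 1 * u v + (-1) * nu v + 0 * u v + 0 * u v <=
      - k + 1 * u v + 1 * nu v + 0 * u v + 0 * u v + 0 * u v.
    move=> v; have [p1 p2 p3] := pwv v; move: p3; rewrite ler_norml /u /nu /k => /andP[p3 _]; lra.
  have := Ex_le (L1_lin5 _ _ _ _ _ _ hY1 L1u L1nu L1u L1u)
                (L1_lin5 _ _ _ _ _ _ L1u L1nu L1u L1u L1u) pw3a.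
  have := Ex_le (L1_lin5 _ _ _ _ _ _ hY1 L1u L1nu L1u L1u)
                (L1_lin5 _ _ _ _ _ _ L1u L1nu L1u L1u L1u) pw3b.
  have ExY0' : Ex (fun v => Y v) = 0 := ExY0.
  rewrite !Ex_lin5 ?hY1 // ?ExY0' ?ExY0 EuE EnuE => a b.
  by rewrite ler_norml; apply/andP; split; lra.
have H4 : (Eu - Enu) ^+ 2 <= (x ^+ 2 + s2) + (y ^+ 2 + s2) - 2 * c.
  set e := Eu - Enu.
  have : 0 <= Ex (fun v => e ^+ 2 + 1 * (u v ^+ 2) + 1 * (nu v ^+ 2) + (-2) * (u v * nu v) + (- (2 * e)) * u v + (2 * e) * nu v).
    apply: Ex_ge0 => v.
    have -> : e ^+ 2 + 1 * (u v ^+ 2) + 1 * (nu v ^+ 2) + (-2) * (u v * nu v) + (- (2 * e)) * u v + (2 * e) * nu v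
      = (u v - nu v - e) ^+ 2 by ring.
    exact: sqr_ge0.
  rewrite Ex_lin5 // Eu2 Enu2 EuE EnuE -/c /e; nra.
have H5 : (Eu + Enu - k) ^+ 2 <= k ^+ 2 + (x ^+ 2 + s2) + (y ^+ 2 + s2) + 2 * c - 2 * k * Eu - 2 * k * Enu.
  set e := Eu + Enu - k.
  have : 0 <= Ex (fun v => (k + e) ^+ 2 + 1 * (u v ^+ 2) + 1 * (nu v ^+ 2) + 2 * (u v * nu v) + (- (2 * (k + e))) * u v + (- (2 * (k + e))) * nu v).
    apply: Ex_ge0 => v.
    have -> : (k + e) ^+ 2 + 1 * (u v ^+ 2) + 1 * (nu v ^+ 2) + 2 * (u v * nu v) + (- (2 * (k + e))) * u v + (- (2 * (k + e))) * nu v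
      = (u v + nu v - k - e) ^+ 2 by ring.
    exact: sqr_ge0.
  rewrite Ex_lin5 // Eu2 Enu2 EuE EnuE -/c /e; nra.
have p0 : 0 <= pi.
  by apply: Ex_ge0 => v; rewrite indE; case: (_ < _).
have p1 : pi <= 1.
  rewrite -(Excst 1); apply: Ex_le => //; first exact: L1cst.
  by move=> v; rewrite indE; case: (_ < _).
have m0 : 0 <= `| `|x| - `|y| | by [].
have mk : `| `|x| - `|y| | <= k.
  by rewrite (le_trans (ler_dist_dist _ _))// ger0_norm// /k subr_ge0.
have mxy : `| `|x| - `|y| | <= `|x + y|.
  by rewrite -(normrN y) (le_trans (ler_dist_dist _ _))// opprK.
have := arith m0 mk mxy H1 H2 H3 H4 H5 p0 p1.
rewrite real_normK ?num_real//.
lra.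
Qed.


Lemma gY_le x y : gY x <= gY y + `|x - y|.
Proof.
rewrite /gY -[X in _ + X](Excst `|x - y|) -ExD; last 2 first.
- exact: L21 (L2u y).
- exact: L1cst.
apply: Ex_le; [exact: L21 (L2u x)| apply: L1D; [exact: L21 (L2u y)| exact: L1cst]|].
move=> v; have := ler_normD (y + Y v) (x - y).
by rewrite (_ : y + Y v + (x - y) = x + Y v)//; ring.
Qed.

Lemma gY_lip x y : `|gY x - gY y| <= `|x - y|.
Proof.
rewrite ler_norml; have := gY_le x y; have := gY_le y x.
rewrite distrC; move=> a b; apply/andP; split; lra.
Qed.

Lemma gY_ge0 x : 0 <= gY x.
Proof. by apply: Ex_ge0. Qed.

Lemma gY_cont : continuous gY.
Proof.
move=> x; apply/cvgrPdist_lt => e e0; near=> z.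
rewrite (le_lt_trans (gY_lip _ _))//.
Unshelve. all: by end_near.

Qed.

End ysec.

Section fubs.
Local Open Scope ereal_scope.
Definition mkmf d' (T' : measurableType d') (f : T -> T') (mf : measurable_fun setT f) : {mfun T >-> T'} :=
  HB.pack f (isMeasurableFun.Build _ _ _ _ f mf).

Lemma fub (X Y : T -> R) (mX : measurable_fun setT X) (mY : measurable_fun setT Y) :
  independent_rv P X Y ->
  forall G : R * R -> \bar R, measurable_fun setT G -> (forall z, (0 <= G z)%E) ->
  (\int[P]_w G (X w, Y w) = \int[P]_w \int[P]_v G (X w, Y v))%E.
Proof.
move=> ind G mG G0.
have mXY : measurable_fun setT (fun w => (X w, Y w)) by exact: measurable_fun_pair.
pose XY := mkmf mXY.
pose X' := mkmf mX.
pose Y' := mkmf mY.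
have -> : \int[P]_w G (X w, Y w) = \int[P]_w (G \o XY) w by [].
rewrite -ge0_integral_distribution//.
have -> : \int[distribution P XY]_z G z = \int[distribution P X' \x distribution P Y']_z G z.
  apply: eq_measure_integral => A mA _.
  apply/esym/product_measure_unique => // B C mB mC.
rewrite (@fubini_tonelli1 _ _ _ _ _ (distribution P X') (distribution P Y') G)//.
rewrite ge0_integral_distribution//; last first.
  by move=> x; apply: integral_ge0 => y _.
  exact: measurable_fun_fubini_tonelli_F.
apply: eq_integral => w _ /=.
rewrite /fubini_F ge0_integral_distribution//.
exact: measurable_fun_pair2.
Qed.
End fubs.

Section main.
Variables (X Y : T -> R) (E : R).
Hypothesis hX2 : L2 X.
Hypothesis hY2 : L2 Y.
Hypothesis hY0 : ('E_P[Y] = 0)%E.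
Hypothesis ind : independent_rv P X Y.

Let mX : measurable_fun setT X := Lmeas (lee1n 2) hX2.
Let mY : measurable_fun setT Y := Lmeas (lee1n 2) hY2.

Lemma F1 : Ex (fun w => `|X w + Y w + E|) = Ex (fun w => gY Y (X w + E)).
Proof.
rewrite /Ex; congr fine.
rewrite unlock.
have := @fub X Y mX mY ind (fun z => (`|z.1 + z.2 + E|)%:E).
rewrite /= => ->; last 2 first.
- apply/measurable_EFinP; apply: measurableT_comp => //.
  apply: measurable_funD => //; apply: measurable_funD.
  + exact: measurable_fst.
  + exact: measurable_snd.
- by move=> z; rewrite lee_fin.
apply: eq_integral => w _.
rewrite /gY -Ex_fin; last exact: L21 (L2u hY2 _).
rewrite unlock; apply: eq_integral => v _.
by rewrite (_ : X w + Y v + E = X w + E + Y v)//; ring.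
Qed.

Lemma F2 : Ex (fun w => `|X w + Y w + E| ^+ 2) = Ex (fun w => (X w + E) ^+ 2) + s2 Y.
Proof.
have La : L2 (fun w => X w + E) := L2D hX2 (L2cst E).
rewrite -[in RHS](Excst (s2 Y)) -ExD; last 2 first.
- exact: L2sq La.
- exact: L1cst.
rewrite /Ex; congr fine.
rewrite unlock.
have := @fub X Y mX mY ind (fun z => ((z.1 + z.2 + E) ^+ 2)%:E).
rewrite /= (_ : (fun w => (`|X w + Y w + E| ^+ 2)%:E) = (fun w => ((X w + Y w + E) ^+ 2)%:E)); last first.
  by apply/funext => w; rewrite real_normK ?num_real.
move=> ->; last 2 first.
- apply/measurable_EFinP; apply: measurable_funX.
  apply: measurable_funD => //; apply: measurable_funD.
  + exact: measurable_fst.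
  + exact: measurable_snd.
- by move=> z; rewrite lee_fin sqr_ge0.
apply: eq_integral => w _.
rewrite -(Ex_u2 hY2 hY0) -Ex_fin; last exact: L2sq (L2u hY2 _).
rewrite unlock; apply: eq_integral => v _.
by rewrite real_normK ?num_real// (_ : X w + Y v + E = X w + E + Y v)//; ring.
Qed.


Lemma varE f : L2 f -> 'V_P[f] = (Ex (fun w => f w ^+ 2) - Ex f ^+ 2)%:E.
Proof.
move=> hf; rewrite varianceE//.
have -> : (f ^+ 2)%R = (fun w => f w ^+ 2) by apply/funext => w; rewrite !expr2.
by rewrite (Ex_fin (L2sq hf)) (Ex_fin (L21 hf)) -EFin_expe -EFinB.
Qed.

Lemma half : ('V_P[(fun w => `|X w + Y w + E|)%R] >=
   (4%:R^-1)%:E * 'V_P[(fun w => `|X w + E|)%R])%E.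
Proof.
have La : L2 (fun w => X w + E) := L2D hX2 (L2cst E).
have LU : L2 (fun w => `|X w + Y w + E|) := L2_norm (L2D (L2D hX2 hY2) (L2cst E)).
have Lna : L2 (fun w => `|X w + E|) := L2_norm La.
rewrite varE// varE// -EFinM lee_fin F1 F2.
have -> : Ex (fun w => `|X w + E| ^+ 2) = Ex (fun w => (X w + E) ^+ 2).
  by congr Ex; apply/funext => w; rewrite real_normK ?num_real.
set A := Ex (fun w => (X w + E) ^+ 2).
set M := Ex (fun w => `|X w + E|).
set Gm := Ex (fun w => gY Y (X w + E)).
have L1a2 : L1 (fun w => (X w + E) ^+ 2) := L2sq La.
have L1na : L1 (fun w => `|X w + E|) := L21 Lna.
have ma : measurable_fun setT (fun w => X w + E) := Lmeas (lee1n 2) La.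
have L1g : L1 (fun w => gY Y (X w + E)).
  apply: (L1_dom (h := fun w => gY Y 0 + `|X w + E|)).
  - exact: measurableT_comp (continuous_measurable_fun (gY_cont hY2)) ma.
  - exact: L1D (L1cst _) L1na.
  - move=> w; rewrite ger0_norm ?gY_ge0// ger0_norm ?addr_ge0 ?gY_ge0//.
    by have := gY_le hY2 (X w + E) 0; rewrite subr0.
have hpt : forall y, 0 <= (3/4) * A + 2 * s2 Y - 2 * Gm * gY Y y + (M / 2) * `|y| + (3/4) * y ^+ 2.
  move=> y.
  have := @Ex_ge0 (fun w => ((3/4) * y ^+ 2 + 2 * s2 Y) + (3/4) * ((X w + E) ^+ 2) + (- (2 * gY Y y)) * gY Y (X w + E)
     + (`|y| / 2) * `|X w + E| + 0 * `|X w + E| + 0 * `|X w + E|).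
  rewrite Ex_lin5// -/A -/M -/Gm.
  move=> h; rewrite (le_trans (h _))//; last lra.
  move=> w; have := D hY2 hY0 (X w + E) y.
  set z := X w + E.
  rewrite -[z ^+ 2]real_normK ?num_real//.
  rewrite -[y ^+ 2]real_normK ?num_real//.
  nra.
have := @Ex_ge0 (fun w => ((3/4) * A + 2 * s2 Y) + (- (2 * Gm)) * gY Y (X w + E) + (M / 2) * `|X w + E|
     + (3/4) * ((X w + E) ^+ 2) + 0 * `|X w + E| + 0 * `|X w + E|).
rewrite Ex_lin5// -/A -/M -/Gm.
have h : forall w, 0 <= ((3/4) * A + 2 * s2 Y) + (- (2 * Gm)) * gY Y (X w + E) + (M / 2) * `|X w + E|
     + (3/4) * ((X w + E) ^+ 2) + 0 * `|X w + E| + 0 * `|X w + E|.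
  by move=> w; have := hpt (X w + E); lra.
move=> /(_ h) H.
nra.
Qed.

End main.
End ex.

End Lemma7Helpers.
Import Lemma7Helpers.
Unset Implicit Arguments. Set Strict Implicit. Set Printing Implicit Defensive.

Theorem lemma7 (d : measure_display) (T : measurableType d) (R : realType)
  (P : probability T R) (X Y : T -> R) (E : R) :
  independent_rv P X Y -> balanced P X -> balanced P Y ->
  X \in Lfun P 2%:E -> Y \in Lfun P 2%:E ->
  ('V_P[(fun w => `|X w + Y w + E|)%R] >=
   (4%:R^-1)%:E * maxe 'V_P[(fun w => `|X w + E|)%R] 'V_P[(fun w => `|Y w + E|)%R])%E.
Proof.
move=> ind bX bY hX hY.
have h1 := half E hX hY bY ind.
have indYX : independent_rv P Y X.
  by move=> A B mA mB; rewrite setIC ind // muleC.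
have h2 := half E hY hX bX indYX.
rewrite (_ : (fun w => `|Y w + X w + E|)%R = (fun w => `|X w + Y w + E|)%R) in h2; last first.
  by apply/funext => w; rewrite (addrC (Y w)).
have [hl|hl] := leP ('V_P[(fun w => `|X w + E|)%R])%E ('V_P[(fun w => `|Y w + E|)%R])%E.
  exact: h2.
exact: h1.
Qed.
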